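(* Let $k$ be a positive integer and $L=\{\ell_1,\ldots,\ell_s\}\subset[0,k-1]$ with $\ell_1<\cdots<\ell_s$; suppose $L$ contains $b$ full runs of consecutive integers with lengths $m_1,\ldots,m_b$. For integers $n>k$, $0\le u\le k$ and $0\le i\le k$ let \[P_i^u=\sum_{j=0}^{i}(-1)^j\binom{u}{j}\binom{k-u}{i-j}\binom{n-k-u}{i-j},\] and let $P$ be the $s\times s$ matrix with $(i,j)$-entry $P_{k-\ell_j}^{\ell_i+1}$. Then, as $n\to\infty$ (with $k,L$ fixed), \[\det(P)=(-1)^sC\,n^{sk-(\ell_1+\cdots+\ell_s)-s}+O\!\left(n^{sk-(\ell_1+\cdots+\ell_s)-s-1}\right),\qquad C=\frac{\prod_{i=1}^s(\ell_i+1)}{\prod_{i=1}^b m_i!\,\prod_{i=1}^s(k-\ell_i-1)!}.\] In particular, $P$ is invertible for all sufficiently large $n$.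
   Context: $[a,b]=\{a,\ldots,b\}$. For $L=\{\ell_1<\cdots<\ell_s\}$, a subset $\{\ell_m,\ldots,\ell_{m+p}\}$ is a run if $\ell_{m+i}=\ell_m+i$ for $0\le i\le p$; it is a full run if moreover ($m=1$ or $\ell_{m-1}<\ell_m-1$) and ($m+p=s$ or $\ell_{m+p+1}>\ell_{m+p}+1$). The length of a run is its cardinality. Binomial coefficients $\binom{a}{c}$ are $0$ when $c<0$ or $c>a\ge0$. *)

(* Defs.v *)
From mathcomp Require Import all_boot all_order all_algebra.
Set Implicit Arguments. Unset Strict Implicit. Unset Printing Implicit Defensive.
Import Order.TTheory GRing.Theory Num.Theory.
Local Open Scope ring_scope.

(* Generalized binomial coefficient with integer top and natural bottom:
   binom(a, c) = a (a-1) ... (a-c+1) / c!. *)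
Definition gbin (a : int) (c : nat) : rat :=
  match a with
  | Posz m => ('C(m, c))%:R
  | Negz m => (-1) ^+ c * ('C(m + c, c))%:R
  end.

Definition Pcoef (k n u i : nat) : rat :=
  \sum_(j < i.+1)
     (-1) ^+ j * ('C(u, j))%:R * ('C(k - u, i - j))%:R
       * gbin (n%:Z - k%:Z - u%:Z) (i - j).

Definition Pmat (k n : nat) (L : seq nat) : 'M[rat]_(size L) :=
  \matrix_(i < size L, j < size L)
     Pcoef k n (nth 0%N L i).+1 (k - nth 0%N L j)%N.

Definition is_full_run (L : seq nat) (m p : nat) : bool :=
  [&& (m + p < size L)%N,
      [forall i : 'I_p.+1, nth 0%N L (m + i) == (nth 0%N L m + i)%N],
      (m == 0%N) || (nth 0%N L m.-1 + 1 < nth 0%N L m)%N &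
      (m + p == (size L).-1)%N || (nth 0%N L (m + p) + 1 < nth 0%N L (m + p).+1)%N].

Definition runs_fact_prod (L : seq nat) : nat :=
  \prod_(m < size L) \prod_(p < size L | is_full_run L m p) (p.+1)`!.

Definition Cconst (k : nat) (L : seq nat) : rat :=
  (\prod_(l <- L) (l.+1)%:R) /
  ((runs_fact_prod L)%:R * \prod_(l <- L) ((k - l.+1)`!)%:R).

Definition Pexp (k : nat) (L : seq nat) : int :=
  (size L * k)%:Z - (\sum_(l <- L) l)%:Z - (size L)%:Z.

(* Main.v *)
Require Import Defs.
From mathcomp Require Import all_boot all_order all_algebra.
From mathcomp Require Import fingroup perm.
From mathcomp Require Import zify ring lra.
Import Order.TTheory GRing.Theory Num.Theory.
Local Open Scope ring_scope.

Module Helpers.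
Set Implicit Arguments. Unset Strict Implicit. Unset Printing Implicit Defensive.

Lemma bin_run_nat l a b :
  ('C(l + a.+1, l + b) * (l + b)`! * (a.+1)`! = (l + a.+1)`! * b`! * 'C(a.+1, b))%N.
Proof.
case: (leqP b a.+1) => hb; last first.
  by rewrite !bin_small ?muln0 ?mul0n //; lia.
have hpos : (0 < (a.+1 - b)`!)%N by apply: fact_gt0.
apply/eqP; rewrite -(eqn_pmul2r hpos); apply/eqP.
have e1 := @bin_fact (l + a.+1) (l + b) ltac:(lia).
have e2 := @bin_fact a.+1 b hb.
have e3 : (l + a.+1 - (l + b) = a.+1 - b)%N by lia.
rewrite e3 in e1.
rewrite -e1 -e2.
move: ('C(_, _)) ((l+b)`!) ('C(_, _)) ((a.+1 - b)`!) (b`!) => x1 x2 x3 x4 x5.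

ring.
Qed.

Lemma prod_fact m : \prod_(a < m) ((a.+1)%:R : rat) = (m`!)%:R.
Proof.
elim: m => [|m IH]; first by rewrite big_ord0 fact0.
by rewrite big_ord_recr /= IH factS natrM mulrC.
Qed.

Lemma detS m : \det (\matrix_(a < m, b < m) ('C(a.+1, b))%:R : 'M[rat]_m) = 1.
Proof.
pose P : 'M[rat]_m := \matrix_(a, c) ('C(a, c))%:R.
pose U : 'M[rat]_m := \matrix_(c, b) (((nat_of_ord c == nat_of_ord b) + ((nat_of_ord c).+1 == nat_of_ord b))%N)%:R.
have -> : \matrix_(a < m, b < m) ('C(a.+1, b))%:R = P *m U.
  apply/matrixP => a b; rewrite !mxE.
  case: b => [[|b] hb] /=.
    rewrite (bigD1 (Ordinal hb)) //= big1 ?addr0; last first.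
      move=> c hc; rewrite !mxE /=.
      have -> : (val c == 0%N) = false by apply/eqP => h; move/eqP: hc; apply; apply: val_inj.
      by rewrite /= mulr0.
    by rewrite !mxE /= !bin0 addn0 mulr1.

  have hb' : (b < m)%N by lia.
  rewrite (bigD1 (Ordinal hb)) //= (bigD1 (Ordinal hb')) /=; last first.
    by apply/eqP => /(congr1 val) /=; lia.
  rewrite big1 ?addr0; last first.
    move=> c /andP [/eqP hc1 /eqP hc2]; rewrite !mxE.
    have -> : (val c == b.+1) = false by apply/eqP => h; apply: hc1; apply: val_inj.
    have -> : ((val c).+1 == b.+1)%N = false by apply/eqP => h; apply: hc2; apply: val_inj; exact: (succn_inj h).
    by rewrite /= mulr0.
  rewrite !mxE /= !eqxx /=.
  have -> : (b.+2 == b.+1)%N = false by apply/eqP; lia.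
  have -> : (b == b.+1)%N = false by apply/eqP; lia.
  by rewrite binS natrD !mulr1.
rewrite det_mulmx det_trig; last first.
  by apply/is_trig_mxP => i j hij; rewrite mxE bin_small.
rewrite -det_tr det_trig; last first.
  apply/is_trig_mxP => i j hij; rewrite !mxE.
  have -> : (nat_of_ord j == nat_of_ord i) = false by apply/eqP; lia.
  have -> : ((nat_of_ord j).+1 == nat_of_ord i)%N = false by apply/eqP; lia.
  by [].
rewrite !big1 ?mulr1 // => i _; rewrite !mxE ?binn //.
by rewrite eqxx; have -> : ((nat_of_ord i).+1 == nat_of_ord i)%N = false by apply/eqP; lia.
Qed.

Lemma run_det l m :
  \det (\matrix_(a < m, b < m) ('C(l + a.+1, l + b))%:R : 'M[rat]_m) * (m`!)%:R
  = \prod_(a < m) ((l + a.+1)%:R).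
Proof.
pose r : 'rV[rat]_m := \row_a (((l + a.+1)`!)%:R / ((a.+1)`!)%:R).
pose c : 'rV[rat]_m := \row_b ((b`!)%:R / ((l + b)`!)%:R).
have -> : \matrix_(a < m, b < m) ('C(l + a.+1, l + b))%:R
   = diag_mx r *m (\matrix_(a < m, b < m) ('C(a.+1, b))%:R) *m diag_mx c.
  rewrite mul_diag_mx mul_mx_diag; apply/matrixP => a b; rewrite !mxE.
  have h := bin_run_nat l a b.
  have f1 : ((l + b)`!)%:R != 0 :> rat by rewrite pnatr_eq0 -lt0n fact_gt0.
  have f2 : ((a.+1)`!)%:R != 0 :> rat by rewrite pnatr_eq0 -lt0n fact_gt0.
  move: h f1 f2; move: ((a.+1)`!) ((l+b)`!) ((l + a.+1)`!) (b`!) => x y z w.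
  move/(congr1 (fun x : nat => x%:R : rat)); rewrite !natrM => h f1 f2.
  apply: (mulIf f1); apply: (mulIf f2).
  rewrite h; field; by rewrite f1 f2.
rewrite !det_mulmx !det_diag detS mulr1.
rewrite -prod_fact -big_split /= -big_split /=; apply: eq_bigr => a _.
rewrite !mxE.
have f1 : ((l + a)`!)%:R != 0 :> rat by rewrite pnatr_eq0 -lt0n fact_gt0.
have f2 : ((a)`!)%:R != 0 :> rat by rewrite pnatr_eq0 -lt0n fact_gt0.
have e1 : (l + a.+1)`! = ((l + a).+1 * (l+a)`!)%N by rewrite addnS factS.
rewrite e1 factS !natrM -addnS.
field; rewrite f1 f2 /=; by rewrite nat1r pnatr_eq0.
Qed.
Lemma nthR l r (L2 : seq nat) x : nth 0%N (iota l r ++ L2) (r + x) = nth 0%N L2 x.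
Proof. by rewrite nth_cat size_iota ltnNge leq_addr /= addKn. Qed.

Lemma nthL l r (L2 : seq nat) x : (x < r)%N -> nth 0%N (iota l r ++ L2) x = (l + x)%N.
Proof. by move=> h; rewrite nth_cat size_iota h nth_iota. Qed.

Lemma nthA l r (L2 : seq nat) x : all (fun y => l + r < y)%N L2 -> (x < size L2)%N ->
  (l + r < nth 0%N L2 x)%N.
Proof. by move=> /all_nthP h hx; apply: h. Qed.

Lemma full_run_shift l r L2 i p : (0 < r)%N -> all (fun y => l + r < y)%N L2 ->
  (i < size L2)%N ->
  is_full_run (iota l r ++ L2) (r + i) p = is_full_run L2 i p.
Proof.
move=> hr ha hi; rewrite /is_full_run size_cat size_iota.
have -> : (r + i + p < r + size L2)%N = (i + p < size L2)%N by rewrite -addnA ltn_add2l.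
have -> : [forall j : 'I_p.+1, nth 0%N (iota l r ++ L2) (r + i + j) == (nth 0%N (iota l r ++ L2) (r + i) + j)%N]
  = [forall j : 'I_p.+1, nth 0%N L2 (i + j) == (nth 0%N L2 i + j)%N].
  by apply: eq_forallb => j; rewrite -addnA !nthR.
have -> : ((r + i == 0%N) || (nth 0%N (iota l r ++ L2) (r + i).-1 + 1 < nth 0%N (iota l r ++ L2) (r + i))%N)
   = ((i == 0%N) || (nth 0%N L2 i.-1 + 1 < nth 0%N L2 i)%N).
  case: i hi => [|i] hi.
    rewrite addn0 nthL; last by lia.
    rewrite -[X in nth _ _ X]addn0 nthR.
    have := nthA (x:=0) ha hi; lia.
  have -> : (r + i.+1).-1 = (r + i)%N by lia.
  by rewrite !nthR; have -> : (r + i.+1 == 0)%N = false by lia.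
have -> : ((r + i + p == (r + size L2).-1) || (nth 0%N (iota l r ++ L2) (r + i + p) + 1 < nth 0%N (iota l r ++ L2) (r + i + p).+1)%N)
   = ((i + p == (size L2).-1) || (nth 0%N L2 (i + p) + 1 < nth 0%N L2 (i + p).+1)%N).
  rewrite (_ : (r + i + p).+1 = r + (i + p).+1)%N; last lia.
  rewrite (_ : (r + i + p) = r + (i + p))%N; last lia.
  rewrite !nthR; congr (_ || _); apply/eqP/eqP; lia.
by [].
Qed.

Lemma full_run_left l r L2 i p : (0 < r)%N -> all (fun y => l + r < y)%N L2 ->
  (i < r)%N -> (p < r + size L2)%N ->
  is_full_run (iota l r ++ L2) i p = (i == 0%N) && (p == r.-1).
Proof.
move=> hr ha hi hp; rewrite /is_full_run size_cat size_iota.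
case: i hi => [|i] hi; last first.
  by rewrite /= (@nthL l r L2 i) ?(@nthL l r L2 i.+1) // ?andbF; lia.
rewrite add0n eqxx /= nthL //.
case: (ltngtP p r.-1) => hpr.
- rewrite (@nthL l r L2 p) ?(@nthL l r L2 p.+1); try lia.
- have hS : (0 < size L2)%N by lia.
  have -> : [forall j : 'I_p.+1, nth 0%N (iota l r ++ L2) (0 + j) == (l + 0 + j)%N] = false.
    apply/negP => /forallP /(_ (Ordinal (ltac:(lia) : (r < p.+1)%N))) /=.
    rewrite add0n -[X in nth _ _ X]addn0 nthR => /eqP.
    have := nthA (x:=0) ha hS; lia.
  by rewrite /= andbF.
- subst p; rewrite hp.
  have -> : [forall j : 'I_r.-1.+1, nth 0%N (iota l r ++ L2) (0 + j) == (l + 0 + j)%N].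
    by apply/forallP => j; rewrite add0n nthL ?addn0 //; have := ltn_ord j; lia.
  rewrite /=; case: (ltnP (r.-1.+1) (r + size L2)) => hS.
  - rewrite (_ : r.-1.+1 = r + 0)%N; last lia.
    rewrite nthR nthL; last lia.
    have := nthA (x:=0) ha ltac:(lia).
    by move=> h; apply/orP; right; lia.
  - by apply/orP; left; apply/eqP; lia.
Qed.

Lemma rfp_cat l r L2 : (0 < r)%N -> all (fun y => l + r < y)%N L2 ->
  runs_fact_prod (iota l r ++ L2) = (r`! * runs_fact_prod L2)%N.
Proof.
move=> hr ha; rewrite /runs_fact_prod size_cat size_iota big_split_ord /=.
congr (_ * _)%N.
- rewrite (eq_bigr (fun i : 'I_r => if nat_of_ord i == 0%N then r`! else 1%N)); last first.
    move=> i _.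
    rewrite (eq_bigl (fun p : 'I_(r + size L2) => (nat_of_ord i == 0%N) && (nat_of_ord p == r.-1))); last first.
      by move=> p; rewrite full_run_left.
    case: ifP => hi /=.
      have hrr : (r.-1 < r + size L2)%N by lia.
      rewrite (big_pred1 (Ordinal hrr)) /=; first by rewrite prednK.
      by move=> p; rewrite /= /pred1 /=; apply/eqP/eqP => [h|->]; [apply: val_inj | ].
    by rewrite big_pred0.
  case: r hr {ha} => [//|r] _.
  by rewrite big_ord_recl /= big1 ?muln1.
- apply: eq_bigr => i _.
  rewrite (eq_bigl (fun p : 'I_(r + size L2) => is_full_run L2 i p)); last first.
    by move=> p; rewrite full_run_shift.
  rewrite [RHS](@big_ord_widen_cond _ _ _ (size L2) (r + size L2) (fun p => is_full_run L2 i p) (fun p => (p.+1)`!)) ?leq_addl //.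
  apply: eq_bigl => p; case h: (is_full_run L2 i p) => //=.
  by move: h; rewrite /is_full_run => /and4P [h1 _ _ _]; lia.

Qed.

Definition Bm (L : seq nat) n : 'M[rat]_n :=
  \matrix_(i, j) ('C((nth 0%N L i).+1, nth 0%N L j))%:R.

Lemma decomp L : sorted ltn L -> L != [::] ->
  exists l r L2, [/\ (0 < r)%N, L = iota l r ++ L2, sorted ltn L2
                   & all (fun y => l + r < y)%N L2].
Proof.
elim: L => [//|x L IH] /= hs _.
case: L IH hs => [|y L] IH hs.
  by exists x, 1%N, [::].
move/andP: (hs) => [hxy hs2].
have [l [r [L2 [hr e hs3 ha]]]] := IH hs2 isT.
have hyl : y = l by move: hr e; case: (r) => [//|r0] _ [].
case: (eqVneq y x.+1) => hy.
  exists x, r.+1, L2; split => //.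
    by rewrite e /= -hyl hy.
  by move: ha; rewrite -hyl hy addSnnS.
exists x, 1%N, (y :: L); split => //=.
have hall : all (ltn y) L := order_path_min ltn_trans hs2.
rewrite addn1; apply/andP; split; first by lia.
apply/allP => z hz; have := allP hall z hz; rewrite /=; lia.
Qed.

Lemma prod_iota l r :
  \prod_(x <- iota l r) ((x.+1)%:R : rat) = \prod_(a < r) ((l + a.+1)%:R).
Proof.
elim: r l => [|r IH] l; first by rewrite big_nil big_ord0.
rewrite /= big_cons big_ord_recl IH addn1; congr (_ * _).
by apply: eq_bigr => i _; rewrite /= addSnnS.
Qed.

Lemma detB N : forall L n, (size L <= N)%N -> sorted ltn L -> size L = n ->
  \det (Bm L n) * ((runs_fact_prod L)%:R : rat) = \prod_(x <- L) ((x.+1)%:R : rat).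
Proof.
elim: N => [|N IH] L n hN hs hn.
  have hL : L = [::] by case: L hN {hs hn}.
  subst L n; by rewrite det_mx00 big_nil /runs_fact_prod big_ord0 mul1r.
case: (eqVneq L [::]) => hL0.
  subst L n; by rewrite det_mx00 big_nil /runs_fact_prod big_ord0 mul1r.
have [l [r [L2 [hr e hs2 ha]]]] := decomp hs hL0.
subst L; rewrite size_cat size_iota in hn hN; subst n.
set M := Bm (iota l r ++ L2) (r + size L2).
have hur : ursubmx M = 0.
  apply/matrixP => i j; rewrite !mxE /= nthL // nthR bin_small //.
  have := nthA (x:=j) ha (ltn_ord j); have := ltn_ord i; lia.
rewrite -(submxK M) hur det_lblock.
have -> : ulsubmx M = \matrix_(a < r, b < r) ('C(l + a.+1, l + b))%:R.
  by apply/matrixP => i j; rewrite !mxE /= !nthL // addnS.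
have -> : drsubmx M = Bm L2 (size L2).
  by apply/matrixP => i j; rewrite !mxE /= !nthR.
rewrite rfp_cat // natrM big_cat /= prod_iota -run_det.
have := IH L2 (size L2) ltac:(lia) hs2 erefl.
move=> <-; ring.
Qed.

Lemma gbin0 a : gbin a 0 = 1.
Proof. by case: a => m /=; rewrite ?bin0 ?expr0 ?mul1r. Qed.

Lemma gbinS a c : gbin a c.+1 * (c.+1)%:R = gbin a c * (a%:~R - c%:R).
Proof.
case: a => m /=.
- have h := mul_bin_left m c.
  case: (leqP c m) => hc.
    have h' : ((c.+1)%:R * ('C(m, c.+1))%:R : rat) = (m - c)%N%:R * ('C(m, c))%:R
      by rewrite -!natrM h.
    by rewrite mulrC h' natrB // mulrC.
  by rewrite !bin_small ?mul0r //; lia.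
- have h := mul_bin_diag (m + c.+1) c.
  rewrite /= in h.
  have h' : ((m + c.+1)%:R * ('C(m + c, c))%:R : rat) = (c.+1)%:R * ('C(m + c.+1, c.+1))%:R.
    by rewrite -!natrM -h addnS.
  rewrite exprS.
  have -> : (Negz m)%:~R = - ((m.+1)%:R : rat) by [].
  have e : (- (m.+1)%:R - c%:R : rat) = - (m + c.+1)%:R by rewrite addnS -!natr1 natrD; ring.
  rewrite e.
  rewrite -!mulrA (mulrC _ (c.+1)%:R) -h'; ring.
Qed.

Lemma gbin_prod (a : int) c : gbin a c * (c`!)%:R = \prod_(t < c) (a%:~R - t%:R).
Proof.
elim: c => [|c IH]; first by rewrite gbin0 big_ord0 fact0 mulr1.
rewrite big_ord_recr /= -IH factS natrM mulrA gbinS; ring.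
Qed.

Definition gp (c x0 : nat) : {poly rat} :=
  ((c`!)%:R)^-1 *: \prod_(t < c) ('X - ((x0 + t)%:R)%:P).

Lemma gp_eval c x0 (n : nat) :
  (gp c x0).[n%:R] = gbin (n%:Z - x0%:Z) c.
Proof.
have f : ((c`!)%:R : rat) != 0 by rewrite pnatr_eq0 -lt0n fact_gt0.
rewrite /gp hornerZ horner_prod.
apply: (mulIf f); rewrite gbin_prod mulrC mulrA mulfV // mul1r.
apply: eq_bigr => t _; rewrite hornerXsubC natrD.
rewrite rmorphB /=; ring.
Qed.

Lemma size_gp c x0 : size (gp c x0) = c.+1.
Proof.
have f : ((c`!)%:R : rat)^-1 != 0 by rewrite invr_eq0 pnatr_eq0 -lt0n fact_gt0.
rewrite /gp size_scale // -big_enum size_prod_XsubC size_enum_ord //.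
Qed.

Lemma coef_gp c x0 : (gp c x0)`_c = ((c`!)%:R)^-1.
Proof.
rewrite /gp coefZ.
have hm := monic_prod_XsubC (enum 'I_c) xpredT (fun t : 'I_c => ((x0 + t)%:R : rat)).
rewrite big_enum /= in hm.
move/monicP: hm; rewrite /lead_coef.
have hs : size (\prod_(t < c) ('X - ((x0 + t)%:R)%:P) : {poly rat}) = c.+1.
  by rewrite -big_enum size_prod_XsubC size_enum_ord.
by rewrite hs /= => ->; rewrite mulr1.
Qed.

Definition Qpol (k u i : nat) : {poly rat} :=
  \sum_(j < i.+1) ((-1) ^+ j * ('C(u, j))%:R * ('C(k - u, i - j))%:R) *: gp (i - j) (k + u).

Lemma Qpol_eval k n u i : Pcoef k n u i = (Qpol k u i).[n%:R].
Proof.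
rewrite /Pcoef /Qpol horner_sum; apply: eq_bigr => j _.
by rewrite hornerZ gp_eval PoszD opprD addrA.
Qed.

Lemma gp_coef_small c x0 t : (c < t)%N -> (gp c x0)`_t = 0.
Proof. by move=> h; rewrite nth_default // size_gp. Qed.

Lemma size_Qpol k u i : (size (Qpol k u i) <= (k - u).+1)%N.
Proof.
apply/leq_sizeP => t ht; rewrite /Qpol coef_sum big1 // => j _; rewrite coefZ.
case: (leqP (i - j) (k - u)) => h.
  by rewrite gp_coef_small ?mulr0 //; lia.
by rewrite (bin_small h) mulr0 mul0r.
Qed.

Lemma sign_sub a b : (b <= a)%N -> ((-1) ^+ (a - b) : rat) = (-1) ^+ a * (-1) ^+ b.
Proof.
move=> h; rewrite -{2}(subnK h) exprD -mulrA -exprD addnn -mul2n exprM sqrrN.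
by rewrite !expr1n mulr1.
Qed.

Lemma coef_Qpol k x y : (x < k)%N -> (y < k)%N ->
  (Qpol k x.+1 (k - y))`_(k - x.+1)
  = (-1) ^+ x.+1 * (-1) ^+ y * ('C(x.+1, y))%:R / ((k - x.+1)`!)%:R.
Proof.
move=> hx hy; rewrite /Qpol coef_sum.
case: (leqP y x.+1) => hyx; last first.
  rewrite bin_small // mulr0 mul0r big1 // => j _.
  by rewrite coefZ gp_coef_small ?mulr0 //; lia.
have hj0 : (x.+1 - y < (k - y).+1)%N by lia.
rewrite (bigD1 (Ordinal hj0)) //= big1 ?addr0; last first.
  move=> j hj; rewrite coefZ.
  case: (ltngtP (k - y - j) (k - x.+1)) => h.
  - by rewrite gp_coef_small ?mulr0.
  - by rewrite (bin_small h) mulr0 mul0r.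
  - exfalso; move/eqP: hj; apply; apply: val_inj => /=; have := ltn_ord j; lia.
rewrite coefZ (_ : (k - y - (x.+1 - y) = k - x.+1)%N); last lia.
rewrite coef_gp binn bin_sub // sign_sub // mulr1.
by [].
Qed.

Lemma mul_coef2 (p q : {poly rat}) dp dq :
  (size p <= dp.+1)%N -> (size q <= dq.+1)%N ->
  (size (p * q)%R <= (dp + dq).+1)%N /\ (p * q)`_(dp + dq) = p`_dp * q`_dq.
Proof.
move=> hp hq; split.
  by apply: leq_trans (size_mul_leq _ _) _; lia.
have hd : (dp < (dp + dq).+1)%N by lia.
rewrite coefM (bigD1 (Ordinal hd)) //= big1 ?addr0; first by rewrite addKn.
move=> j hj; case: (ltngtP j dp) => h.
- by rewrite (nth_default 0 (_ : size q <= dp + dq - j)%N) ?mulr0 //; apply: leq_trans hq _; lia.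
- by rewrite (nth_default 0 (_ : size p <= j)%N) ?mul0r //; apply: leq_trans hp _; lia.
- by exfalso; move/eqP: hj; apply; apply: val_inj.
Qed.

Lemma prod_coef (I : Type) (r : seq I) (F : I -> {poly rat}) (d : I -> nat) :
  (forall i, (size (F i) <= (d i).+1)%N) ->
  (size (\prod_(i <- r) F i)%R <= (\sum_(i <- r) d i).+1)%N /\
  (\prod_(i <- r) F i)`_(\sum_(i <- r) d i)%N = \prod_(i <- r) (F i)`_(d i).
Proof.
move=> hF; elim: r => [|x r [IH1 IH2]].
  by rewrite !big_nil size_poly1 coef1.
rewrite !big_cons; have [h1 h2] := mul_coef2 (hF x) IH1.
by split => //; rewrite h2 IH2.
Qed.

Lemma coef_sign (b : bool) (p : {poly rat}) t : ((-1) ^+ b * p)`_t = (-1) ^+ b * p`_t.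
Proof. by case: b; rewrite ?expr0 ?expr1 ?mul1r ?mulN1r ?coefN. Qed.

Lemma det_coef n (Q : 'M[{poly rat}]_n) (d : 'I_n -> nat) :
  (forall a b, (size (Q a b) <= (d a).+1)%N) ->
  (size (\det Q) <= (\sum_a d a).+1)%N /\
  (\det Q)`_(\sum_a d a)%N = \det (\matrix_(a, b) (Q a b)`_(d a)).
Proof.
move=> hQ; split.
  apply/leq_sizeP => t ht; rewrite /determinant coef_sum big1 // => s _.
  rewrite coef_sign.
  have [h1 _] := @prod_coef _ (index_enum _) (fun i => Q i (s i)) d (fun i => hQ i (s i)).
  by rewrite nth_default ?mulr0 //; apply: leq_trans h1 ht.
rewrite /determinant coef_sum; apply: eq_bigr => s _.
rewrite coef_sign.
have [_ h2] := @prod_coef _ (index_enum _) (fun i => Q i (s i)) d (fun i => hQ i (s i)).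
by rewrite h2; congr (_ * _); apply: eq_bigr => i _; rewrite mxE.
Qed.

Lemma poly_diff (D : {poly rat}) e (x : rat) : (size D <= e.+1)%N ->
  D.[x] - D`_e * x ^+ e = \sum_(i < e) D`_i * x ^+ i.
Proof.
move=> hs; rewrite (horner_coef_wide x hs) big_ord_recr /= addrK //.
Qed.

Lemma poly_bound (D : {poly rat}) e (x : rat) : (size D <= e.+1)%N -> 1 <= x ->
  `|D.[x] - D`_e * x ^+ e| <= (\sum_(i < e) `|D`_i|) * x ^ (e%:Z - 1).
Proof.
move=> hs hx; rewrite poly_diff //.
case: e hs => [|e] hs.
  by rewrite !big_ord0 normr0 mul0r.
have -> : ((e.+1)%:Z - 1 = e%:Z)%R by rewrite -addn1 PoszD addrK.
rewrite mulr_suml; apply: le_trans (ler_norm_sum _ _ _) _.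
apply: ler_sum => i _; rewrite normrM normrX (ger0_norm (le_trans ler01 hx)).
apply: ler_wpM2l => //; apply: ler_weXn2l => //; have := ltn_ord i; lia.
Qed.

Lemma poly_nonzero (D : {poly rat}) e : (size D <= e.+1)%N -> D`_e != 0 ->
  exists N : nat, forall n : nat, (N <= n)%N -> D.[n%:R] != 0.
Proof.
move=> hs hc.
case: e hs hc => [|e] hs hc.
  exists 0%N => n _; rewrite (horner_coef_wide _ hs) big_ord1 expr0 mulr1 //.
set M := \sum_(i < e.+1) `|D`_i|.
have hM : 0 <= M / `|D`_e.+1| by apply: divr_ge0; [apply: sumr_ge0 => i _|].
exists (Num.Def.archi_bound (M / `|D`_e.+1|)).+1 => n hn; apply/eqP => h0.
have hn1 : (1 : rat) <= n%:R by rewrite ler1n; lia.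
have := @poly_bound D e.+1 n%:R hs hn1.
rewrite h0 sub0r normrN normrM normrX (ger0_norm (le_trans ler01 hn1)) -/M.
have -> : ((e.+1)%:Z - 1 = e%:Z)%R by rewrite -addn1 PoszD addrK.
have hpe : 0 < (n%:R : rat) ^+ e by apply: exprn_gt0; apply: lt_le_trans hn1.
rewrite exprS mulrA ler_pM2r // => h1.
have hcp : 0 < `|D`_e.+1| by rewrite normr_gt0.
have h2 : n%:R <= M / `|D`_e.+1| by rewrite ler_pdivlMr // mulrC.
have h3 := archi_boundP hM.
have h4 : ((Num.Def.archi_bound (M / `|D`_e.+1|))%:R : rat) < n%:R by rewrite ltr_nat.
have := lt_trans h3 h4; rewrite ltNge h2 //.
Qed.

Definition QM (k : nat) (L : seq nat) : 'M[{poly rat}]_(size L) :=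
  \matrix_(a, b) Qpol k (nth 0%N L a).+1 (k - nth 0%N L b).

Lemma Pmat_eval k n L : \det (Pmat k n L) = (\det (QM k L)).[n%:R].
Proof.
rewrite -horner_evalE -det_map_mx; congr (\det _).
by apply/matrixP => a b; rewrite !mxE ?horner_evalE Qpol_eval.
Qed.

Lemma prod_nth (F : nat -> rat) (L : seq nat) :
  \prod_(l <- L) F l = \prod_(a < size L) F (nth 0%N L a).
Proof. by rewrite (big_nth 0%N) big_mkord. Qed.

Lemma sum_exp k L : all (fun l => (l < k)%N) L ->
  ((\sum_(l <- L) (k - l.+1)) + (\sum_(l <- L) l) + size L = size L * k)%N.
Proof.
elim: L => [|x L IH] /=; first by rewrite !big_nil.
move=> /andP [hx hL]; have := IH hL; rewrite !big_cons mulSn; lia.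
Qed.

Lemma lead_val k L : (0 < k)%N -> sorted ltn L -> all (fun l => (l < k)%N) L ->
  (\det (QM k L))`_(\sum_(a < size L) (k - (nth 0%N L a).+1))%N
  = (-1) ^+ size L * Cconst k L.
Proof.
move=> hk hs ha.
have hQ : forall a b : 'I_(size L), (size (QM k L a b) <= (k - (nth 0%N L a).+1).+1)%N.
  by move=> a b; rewrite mxE size_Qpol.
have [_ ->] := det_coef hQ.
have hlt : forall a : 'I_(size L), (nth 0%N L a < k)%N.
  by move=> a; apply: (allP ha); apply: mem_nth.
pose r : 'rV[rat]_(size L) :=
  \row_a ((-1) ^+ (nth 0%N L a).+1 / ((k - (nth 0%N L a).+1)`!)%:R).
pose c : 'rV[rat]_(size L) := \row_b ((-1) ^+ (nth 0%N L b)).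
have -> : \matrix_(a, b) (QM k L a b)`_(k - (nth 0%N L a).+1)
   = diag_mx r *m Bm L (size L) *m diag_mx c.
  rewrite mul_diag_mx mul_mx_diag; apply/matrixP => a b; rewrite !mxE.
  rewrite coef_Qpol //; by rewrite mulrAC -!mulrA; congr (_ * _); rewrite mulrC mulrA.
rewrite !det_mulmx !det_diag.
have hrfp : ((runs_fact_prod L)%:R : rat) != 0.
  by rewrite pnatr_eq0 -lt0n; apply: prodn_gt0 => m; apply: prodn_gt0 => p; apply: fact_gt0.
have hB := detB (leqnn (size L)) hs erefl.
have -> : \det (Bm L (size L)) = (\prod_(x <- L) ((x.+1)%:R : rat)) / (runs_fact_prod L)%:R.
  by rewrite -hB mulfK.
rewrite /Cconst !prod_nth.
rewrite mulrAC.
have -> : \prod_(a < size L) r 0 a * \prod_(a < size L) c 0 a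
    = (-1) ^+ size L / \prod_(a < size L) ((k - (nth 0%N L a).+1)`!)%:R.
  rewrite mulrC -big_split /=.
  rewrite (eq_bigr (fun a : 'I_(size L) => (-1) * (((k - (nth 0%N L a).+1)`!)%:R)^-1)); last first.
    by move=> a _; rewrite !mxE mulrA -exprD addnS exprS addnn -mul2n exprM sqrrN !expr1n mulr1.
  rewrite big_split /= prodr_const card_ord prodfV //.
have hF : \prod_(a < size L) (((k - (nth 0%N L a).+1)`!)%:R : rat) != 0.
  by rewrite prodf_seq_neq0; apply/allP => a _; rewrite pnatr_eq0 -lt0n fact_gt0.
field; by rewrite hrfp hF.
Qed.

End Helpers.
Import Helpers.

Theorem lemma1 (k : nat) (L : seq nat) :
  (0 < k)%N -> sorted ltn L -> all (fun l => (l < k)%N) L ->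
  (exists (M : rat) (N : nat), forall n : nat, (k < n)%N -> (N <= n)%N ->
     `| \det (Pmat k n L)
        - (-1) ^+ size L * Cconst k L * (n%:R : rat) ^ Pexp k L |
     <= M * (n%:R : rat) ^ (Pexp k L - 1))
  /\ (exists N : nat, forall n : nat, (k < n)%N -> (N <= n)%N ->
        Pmat k n L \in unitmx).
Proof.
move=> hk hs ha.
have hQ : forall a b : 'I_(size L), (size (QM k L a b) <= (k - (nth 0%N L a).+1).+1)%N.
  by move=> a b; rewrite mxE size_Qpol.
have [hsz _] := det_coef hQ.
have hc := lead_val hk hs ha.
move: hsz hc.
set e := (\sum_(a < size L) (k - (nth 0%N L a).+1))%N.
set D := \det (QM k L) => hsz hc.
have hP : Pexp k L = e%:Z.
  have h := sum_exp ha.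
  have he : e = (\sum_(l <- L) (k - l.+1))%N by rewrite /e (big_nth 0%N) big_mkord.
  rewrite /Pexp he -h; lia.
have hC : (-1) ^+ size L * Cconst k L != 0.
  rewrite mulf_neq0 ?signr_eq0 // /Cconst mulf_neq0 //.
    by rewrite prodf_seq_neq0; apply/allP => x _; rewrite pnatr_eq0.
  rewrite invr_eq0 mulf_neq0 //.
    by rewrite pnatr_eq0 -lt0n; apply: prodn_gt0 => m; apply: prodn_gt0 => p; apply: fact_gt0.
  by rewrite prodf_seq_neq0; apply/allP => x _; rewrite pnatr_eq0 -lt0n fact_gt0.
split.
  exists (\sum_(i < e) `|D`_i|), 0%N => n hn _.
  have hn1 : (1 : rat) <= n%:R by rewrite ler1n; lia.
  rewrite Pmat_eval -hc hP.
  exact: poly_bound.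
rewrite -hc in hC.
have [N hN] := poly_nonzero hsz hC.
exists N => n _ hn.
by rewrite unitmxE unitfE Pmat_eval; apply: hN.
Qed.
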